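(* Let $k,n\ge1$, $T:\{0,1\}^k\to\{0,1\}$ a truth table, $(\mathbf z^{[1]},\mathbf z^{[0]},\mathbf z^{[-1]})$ a triple of $n$-bit strings with configuration basis numbers $(n_s)_{s\in\{0,1\}^3}$, and $f:\{0,1\}^3\to\mathbb C$ arbitrary. Then $$\mathbf E_\sigma f\big(\mathbf 1[\mathbf z^{[1]}\vdash\sigma],\mathbf 1[\mathbf z^{[0]}\vdash\sigma],\mathbf 1[\mathbf z^{[-1]}\vdash\sigma]\big)=\sum_{\mathbf y\in\{0,1\}^3}\sum_{\mathbf k\in\mathcal P(k)}f(\mathbf y)\,\frac{1}{2^k}\Big(\prod_{s\in\{0,1\}^3}\Big(\frac{n_s+n_{\bar s}}{n}\Big)^{k_s}\Big)\big|\mathcal Z(\mathbf y,\mathbf k)\big|.$$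
   Context: A clause on $n$ variables is $\sigma=((l_0,\nu_0),\dots,(l_{k-1},\nu_{k-1}))$ with $l_q\in\{0,\dots,n-1\}$, $\nu_q\in\{0,1\}$; $\mathbf x\in\{0,1\}^n$ satisfies $\sigma$ ($\mathbf x\vdash\sigma$) iff $T(x_{l_0}\oplus\nu_0,\dots,x_{l_{k-1}}\oplus\nu_{k-1})=1$. A random clause has all $l_q$ independent uniform in $\{0,\dots,n-1\}$ (repetitions allowed) and all $\nu_q$ independent uniform in $\{0,1\}$; $\mathbf E_\sigma$ is expectation over it. Configuration basis numbers of a triple of $q$-bit strings: $q_s=|\{j:(w^{[1]}_j,w^{[0]}_j,w^{[-1]}_j)=s\}|$, $s\in\{0,1\}^3$; $\bar s$ is the bitwise complement. $\mathcal P(k)$ is the set of families $(k_s)_{s\in\{0,1\}^3}$ of nonnegative integers summing to $k$. $\mathcal Z(\mathbf y,\mathbf k)$ is the set of triples $(\mathbf w^{[1]},\mathbf w^{[0]},\mathbf w^{[-1]})$ of $k$-bit strings with $T(\mathbf w^{[t]})=y^{[t]}$ for all $t\in\{1,0,-1\}$ and configuration basis numbers $\mathbf k$. *)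

(* Defs.v *)
From mathcomp Require Import all_boot all_order all_algebra.
Set Implicit Arguments. Unset Strict Implicit. Unset Printing Implicit Defensive.
Import Order.TTheory GRing.Theory Num.Theory.
Local Open Scope ring_scope.

Notation bits q := {ffun 'I_q -> bool}.
(* configuration labels s in {0,1}^3, written (s1, s0, s_{-1}) *)
Notation config := (bool * bool * bool)%type.

(* a clause on n variables with k literals: (l_q, nu_q)_{q<k} *)
Definition clause (n k : nat) := ({ffun 'I_k -> 'I_n} * {ffun 'I_k -> bool})%type.

Definition sat (n k : nat) (T : bits k -> bool) (x : bits n) (sigma : clause n k) : bool :=
  T [ffun q => addb (x (sigma.1 q)) (sigma.2 q)].

Definition Eclause (C : numFieldType) (n k : nat) (F : clause n k -> C) : C :=
  (#|{: clause n k}|%:R)^-1 * \sum_(sigma : clause n k) F sigma.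

Definition cbn (q : nat) (w1 w0 wm1 : bits q) (s : config) : nat :=
  #|[set j : 'I_q | (w1 j, w0 j, wm1 j) == s]|.

Definition cbar (s : config) : config := (~~ s.1.1, ~~ s.1.2, ~~ s.2).

Definition Pk (k : nat) : {set {ffun config -> 'I_k.+1}} :=
  [set kk : {ffun config -> 'I_k.+1} | (\sum_(s : config) (kk s : nat))%N == k].

Definition Zset (k : nat) (T : bits k -> bool) (y : config) (kk : {ffun config -> 'I_k.+1})
  : {set bits k * bits k * bits k} :=
  [set w | [&& T w.1.1 == y.1.1, T w.1.2 == y.1.2, T w.2 == y.2
           & [forall s, cbn w.1.1 w.1.2 w.2 s == kk s]]].

(* Main.v *)
Require Import Defs.
From mathcomp Require Import all_boot all_order all_algebra.
From mathcomp Require Import ring.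
Import Order.TTheory GRing.Theory Num.Theory.
Local Open Scope ring_scope.
Set Implicit Arguments. Unset Strict Implicit. Unset Printing Implicit Defensive.

Definition trip n (z1 z0 zm1 : bits n) (a : 'I_n) (b : bool) : config :=
  (addb (z1 a) b, addb (z0 a) b, addb (zm1 a) b).

Definition wcol k (w : bits k * bits k * bits k) (q : 'I_k) : config :=
  (w.1.1 q, w.1.2 q, w.2 q).

Definition phi n k (z1 z0 zm1 : bits n) (s : clause n k) : bits k * bits k * bits k :=
  ([ffun q => addb (z1 (s.1 q)) (s.2 q)], [ffun q => addb (z0 (s.1 q)) (s.2 q)],
   [ffun q => addb (zm1 (s.1 q)) (s.2 q)]).

Lemma phi_eq n k (z1 z0 zm1 : bits n) (s : clause n k) w :
  (phi z1 z0 zm1 s == w) = [forall q, trip z1 z0 zm1 (s.1 q) (s.2 q) == wcol w q].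
Proof.
case: w => [[w1 w0] wm1]; apply/eqP/forallP => [E q | H].
- by rewrite -E /trip /wcol /= !ffunE.
- rewrite /phi; congr (_,_,_); apply/ffunP => q; rewrite ffunE;
  by move: (H q) => /eqP [].
Qed.

Lemma prod_ind (R : comPzSemiRingType) (I : finType) (P : pred I) :
  \prod_i ((P i)%:R : R) = ([forall i, P i])%:R.
Proof.
case: (boolP [forall i, P i]) => [/forallP H|/forallPn [i Hi]].
  by rewrite big1 // => i _; rewrite H.
by rewrite (bigD1 i) //= (negbTE Hi) mul0r.
Qed.

Lemma core (R : comPzRingType) n k (G : 'I_k -> 'I_n -> bool -> R) :
  \sum_(s : clause n k) \prod_q G q (s.1 q) (s.2 q) = \prod_q \sum_a \sum_b G q a b.
Proof.
transitivity (\sum_(l : {ffun 'I_k -> 'I_n}) \sum_(v : {ffun 'I_k -> bool})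
   \prod_q G q (l q) (v q)).
  by rewrite pair_big.
rewrite bigA_distr_bigA.
apply: eq_bigr => l _.
by rewrite bigA_distr_bigA.
Qed.

Lemma sum_ind (R : pzSemiRingType) (I : finType) (P : pred I) :
  \sum_i ((P i)%:R : R) = #|[set i | P i]|%:R.
Proof.
rewrite -sum1_card natr_sum [RHS]big_mkcond /=; apply: eq_bigr => i _.
by rewrite inE; case: (P i).
Qed.

Lemma count_trip (R : pzSemiRingType) n (z1 z0 zm1 : bits n) s :
  \sum_a \sum_b ((trip z1 z0 zm1 a b == s)%:R : R)
  = (cbn z1 z0 zm1 s + cbn z1 z0 zm1 (cbar s))%:R.
Proof.
rewrite natrD /cbn -!sum_ind -big_split /=; apply: eq_bigr => a _.
rewrite big_bool /= addrC; congr (_ + _); congr (_%:R); congr (nat_of_bool _).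
  by rewrite /trip !addbF.
case: s => [[s1 s2] s3]; rewrite /trip /cbar /= !addbT.
by case: (z1 a); case: (z0 a); case: (zm1 a); case: s1; case: s2; case: s3.
Qed.

Lemma part_prod (R : comPzSemiRingType) k (c : 'I_k -> config) (G : config -> R) :
  \prod_q G (c q) = \prod_s G s ^+ #|[set q | c q == s]|.
Proof.
rewrite (partition_big c predT) //; apply: eq_bigr => s _.
rewrite -prodr_const; apply: eq_big => q; first by rewrite inE.
by move/eqP <-.
Qed.

Lemma part_sum k (c : 'I_k -> config) :
  (\sum_s #|[set q | c q == s]|)%N = k.
Proof.
transitivity (\sum_(q : 'I_k) 1)%N; last by rewrite sum1_card card_ord.
rewrite [RHS](partition_big c predT) //.
apply: eq_bigr => s _; rewrite -sum1_card; apply: eq_bigl => q; by rewrite inE.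
Qed.

Lemma card_clause n k : #|{: clause n k}| = (n ^ k * 2 ^ k)%N.
Proof. by rewrite card_prod !card_ffun !card_ord card_bool. Qed.

Theorem mainTheorem9 (C : numClosedFieldType) (k n : nat) (hk : (0 < k)%N) (hn : (0 < n)%N)
  (T : bits k -> bool) (z1 z0 zm1 : bits n) (f : config -> C) :
  Eclause (fun sigma : clause n k => f (sat T z1 sigma, sat T z0 sigma, sat T zm1 sigma))
  = \sum_(y : config) \sum_(kk in Pk k)
      f y * (2 ^ k)%:R^-1
      * (\prod_(s : config)
           (((cbn z1 z0 zm1 s + cbn z1 z0 zm1 (cbar s))%:R / n%:R) ^+ kk s))
      * #|Zset T y kk|%:R.
Proof.
set m := fun s => (cbn z1 z0 zm1 s + cbn z1 z0 zm1 (cbar s))%N.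
set F := fun w : bits k * bits k * bits k => f (T w.1.1, T w.1.2, T w.2).
set cw := fun (w : bits k * bits k * bits k) s => cbn w.1.1 w.1.2 w.2 s.
set h := fun w => F w * (2 ^ k)%:R^-1 * \prod_s ((m s)%:R / n%:R) ^+ cw w s.
have cwP w : (\sum_s cw w s)%N = k by apply: (part_sum (wcol w)).
have nz : (n%:R : C) != 0 by rewrite pnatr_eq0 -lt0n.
transitivity (\sum_w h w).
  rewrite /Eclause.
  have E1 : \sum_(sigma : clause n k) f (sat T z1 sigma, sat T z0 sigma, sat T zm1 sigma)
      = \sum_w F w * \prod_s (m s)%:R ^+ cw w s.
    transitivity (\sum_(sigma : clause n k) \sum_w (phi z1 z0 zm1 sigma == w)%:R * F w).
      apply: eq_bigr => sg _.
      rewrite (bigD1 (phi z1 z0 zm1 sg)) //= eqxx mul1r big1 ?addr0 //.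
      by move=> w /negbTE; rewrite eq_sym => ->; rewrite mul0r.
    rewrite exchange_big /=; apply: eq_bigr => w _.
    rewrite -mulr_suml mulrC; congr (_ * _).
    transitivity (\sum_(sigma : clause n k) \prod_q
        (((trip z1 z0 zm1 (sigma.1 q) (sigma.2 q) == wcol w q)%:R) : C)).
      by apply: eq_bigr => sg _; rewrite phi_eq prod_ind.
    rewrite (core (fun q a b => ((trip z1 z0 zm1 a b == wcol w q)%:R : C))).
    under eq_bigr => q _ do rewrite count_trip.
    exact: (part_prod (wcol w) (fun s => (m s)%:R)).
  rewrite E1 mulr_sumr; apply: eq_bigr => w _.
  rewrite /h /= card_clause natrM !natrX.
  have -> : \prod_s ((m s)%:R / n%:R) ^+ cw w s
      = (\prod_s (m s)%:R ^+ cw w s) * (n%:R^-1) ^+ k :> C.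
    by rewrite -(cwP w) -prodrXr -big_split /=; apply: eq_bigr => s _; rewrite exprMn.
  rewrite invfM exprVn.
  ring.
symmetry.
transitivity (\sum_y \sum_(kk in Pk k) \sum_w (if w \in Zset T y kk then h w else 0)).
  apply: eq_bigr => -[[y1 y2] y3] _; apply: eq_bigr => kk _.
  rewrite -sum1_card natr_sum mulr_sumr [LHS]big_mkcond /=; apply: eq_bigr => w _.
  case: ifP => // Hw; rewrite mulr1.
  rewrite inE in Hw; move/and4P: Hw => [/eqP e1 /eqP e2 /eqP e3 /forallP e4].
  rewrite /h /F /= e1 e2 e3; congr (_ * _).
  by apply: eq_bigr => s _; rewrite /cw (eqP (e4 s)).
under eq_bigr => y _ do rewrite exchange_big.
rewrite exchange_big /=; apply: eq_bigr => w _.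
set y0 := (T w.1.1, T w.1.2, T w.2).
have cwle s : (cw w s < k.+1)%N by rewrite ltnS -{1}(cwP w) (bigD1 s) //= leq_addr.
set k0 : {ffun config -> 'I_k.+1} := [ffun s => inord (cw w s)].
have k0P : k0 \in Pk k.
  rewrite inE; apply/eqP; rewrite -[RHS](cwP w); apply: eq_bigr => s _.
  by rewrite ffunE inordK.
have Z y kk : (w \in Zset T y kk) = (y == y0) && (kk == k0).
  case: y => [[y1 y2] y3]; rewrite inE /y0 /=; apply/idP/idP.
  - case/and4P => /eqP <- /eqP <- /eqP <- /forallP H; rewrite !eqxx /=.
    apply/eqP/ffunP => s; apply: val_inj; rewrite ffunE /= inordK //.
    exact/esym/eqP/H.
  - case/andP => /eqP [<- <- <-] /eqP ->; rewrite !eqxx /=; apply/forallP => s.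
    by rewrite ffunE inordK.
under eq_bigr => y _ do under eq_bigr => kk _ do rewrite Z.
rewrite (bigD1 y0) //= [X in _ + X]big1 ?addr0; last first.
  by move=> y /negbTE Hy; apply: big1 => kk _; rewrite Hy.
rewrite (bigD1 k0) //= !eqxx big1 ?addr0 // => kk /andP [_ /negbTE ->].
by rewrite andbF.
Qed.
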